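(* Let $v\ge2$ and $k\in\{5,6\}$. Then an optimum $(d,3)$-CDA$((d+1)v^3;k,v)$ exists for every positive integer $d$ with $d+1\le v$.
   Context: Consecutive $t$-way interaction in an $N\times k$ array $A=(a_{ij})$ over a $v$-set $V$: $T=\{(i,x_i),\dots,(i+t-1,x_{i+t-1})\}$, $1\le i\le k-t+1$, $x_r\in V$; $\rho(A,T)=\{r: a_{r,j}=x_j\ \forall (j,x_j)\in T\}$, $\rho(A,\mathcal T)=\bigcup_{T\in\mathcal T}\rho(A,T)$. A $(d,t)$-CDA$(N;k,v)$ is an $N\times k$ array over $V$ in which every $t$ consecutive columns contain every $t$-tuple at least once, and such that for every set $\mathcal T$ of exactly $d$ distinct consecutive $t$-way interactions and every consecutive $t$-way interaction $T$: $\rho(A,T)\subseteq\rho(A,\mathcal T)$ iff $T\in\mathcal T$. It is optimum if $N=(d+1)v^t$. *)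

(* Defs.v *)
From mathcomp Require Import all_boot all_order all_algebra.
Set Implicit Arguments. Unset Strict Implicit. Unset Printing Implicit Defensive.

Definition array (N k v : nat) := 'M['I_v]_(N, k).

(* A consecutive t-way interaction in an array with k columns:
   a starting column i (0-based, i + t <= k, i.e. i < k - t + 1)
   together with the values x_0, ..., x_(t-1) placed in columns i, ..., i+t-1. *)
Definition interaction (k t v : nat) :=
  ('I_(k.+1 - t) * {ffun 'I_t -> 'I_v})%type.

Definition rho (N k t v : nat) (A : array N k v) (T : interaction k t v)
  : {set 'I_N} :=
  [set r : 'I_N | [forall j : 'I_t, forall c : 'I_k,
      (val c == val T.1 + val j) ==> (A r c == T.2 j)]].

Definition rhoset (N k t v : nat) (A : array N k v)
  (TT : {set interaction k t v}) : {set 'I_N} :=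
  \bigcup_(T in TT) rho A T.

Definition is_CDA (d t N k v : nat) (A : array N k v) : Prop :=
  (forall T : interaction k t v, rho A T != set0) /\
  (forall (TT : {set interaction k t v}) (T : interaction k t v),
      #|TT| = d -> (rho A T \subset rhoset A TT) <-> T \in TT).

Definition optimum_CDA_exists (d t k v : nat) : Prop :=
  exists A : array ((d + 1) * v ^ t) k v, is_CDA d t A.

(* Main.v *)
Require Import Defs.
From mathcomp Require Import all_boot all_order all_algebra.
From mathcomp Require Import zify.
Set Implicit Arguments. Unset Strict Implicit. Unset Printing Implicit Defensive.
Import GRing.Theory.

Lemma cda_of (d N k v : nat) (A : array N k v) :
  (forall T : interaction k 3 v, exists h : 'I_(d.+1) -> 'I_N,
      injective h /\ forall s, h s \in rho A T) ->
  (forall (T1 T2 : interaction k 3 v) r1 r2, r1 \in rho A T1 -> r1 \in rho A T2 ->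
      r2 \in rho A T1 -> r2 \in rho A T2 -> r1 = r2 \/ T1 = T2) ->
  is_CDA d 3 A.
Proof.
move=> H1 H2; split.
  by move=> T; have [h [_ hT]] := H1 T; apply/set0Pn; exists (h ord0).
move=> TT T cTT; split; last first.
  by move=> TinTT; rewrite /rhoset; exact: (bigcup_sup T TinTT).
move=> sub; apply/negPn/negP => TnTT.
have [h [hinj hT]] := H1 T.
pose g s := odflt T [pick T' in TT | h s \in rho A T'].
have gP s : g s \in TT /\ h s \in rho A (g s).
  rewrite /g; case: pickP => [T' /andP[-> ->] // | none].
  have := subsetP sub _ (hT s); rewrite /rhoset => /bigcupP [T' T'in hsin].
  by have := none T'; rewrite T'in hsin.
have ginj : injective g.
  move=> s1 s2 eg; apply: hinj.
  have [g1 h1] := gP s1; have [g2 h2] := gP s2.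
  case: (H2 T (g s1) (h s1) (h s2) (hT s1) h1 (hT s2)) => //.
    by rewrite eg.
  by move=> eT; move: TnTT; rewrite eT g1.
have : #|g @: [set: 'I_d.+1]| <= #|TT|.
  by apply: subset_leq_card; apply/subsetP => _ /imsetP[s _ ->]; exact (gP s).1.
by rewrite card_imset // cardsT card_ord cTT ltnn.
Qed.

Definition entry (V : zmodType) (s y0 y1 y2 : V) (c : nat) : V :=
  match c with 0 => y0 | 1 => y1 | 2 => y2 | 3 => (y0 + s)%R
  | 4 => (y1 + s)%R | _ => (y2 + s)%R end.

Definition solve (V : zmodType) (i : nat) (s x0 x1 x2 : V) : V * (V * V) :=
  match i with 0 => (x0, (x1, x2)) | 1 => (x2 - s, (x0, x1))%R
  | 2 => (x1 - s, (x2 - s, x0))%R | _ => (x0 - s, (x1 - s, x2 - s))%R end.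

Lemma solve_ok (V : zmodType) (s x0 x1 x2 : V) i j : i <= 3 -> j < 3 ->
  entry s (solve i s x0 x1 x2).1 (solve i s x0 x1 x2).2.1 (solve i s x0 x1 x2).2.2 (i + j)
  = nth 0%R [:: x0; x1; x2] j.
Proof.
by case: i => [|[|[|[|i]]]] //; case: j => [|[|[|j]]] //= _ _; rewrite ?subrK.
Qed.

Lemma ffun3 (V : zmodType) (x : {ffun 'I_3 -> V}) (j : 'I_3) :
  x j = nth 0%R [:: x (@Ordinal 3 0 isT); x (@Ordinal 3 1 isT); x (@Ordinal 3 2 isT)] j.
Proof.
by case: j => [[|[|[|j]]] Hj] //=; congr (x _); apply: val_inj.
Qed.

Lemma entry_inj (V : zmodType) (s1 y0 y1 y2 s2 z0 z1 z2 : V) i : i <= 2 ->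
  (forall c, i <= c <= i + 3 -> entry s1 y0 y1 y2 c = entry s2 z0 z1 z2 c) ->
  [/\ s1 = s2, y0 = z0, y1 = z1 & y2 = z2].
Proof.
case: i => [|[|[|i]]] // _ H.
- have /= e0 := H 0 isT; have /= e1 := H 1 isT; have /= e2 := H 2 isT.
  have /= e3 := H 3 isT. by rewrite e0 in e3; move/addrI: e3.
- have /= e1 := H 1 isT; have /= e2 := H 2 isT; have /= e3 := H 3 isT.
  have /= e4 := H 4 isT. rewrite e1 in e4; move/addrI: e4 => es.
  by rewrite es in e3; move/addIr: e3.
- have /= e2 := H 2 isT; have /= e3 := H 3 isT; have /= e4 := H 4 isT.
  have /= e5 := H 5 isT. rewrite e2 in e5; move/addrI: e5 => es.
  by rewrite es in e3 e4; move/addIr: e3; move/addIr: e4.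
Qed.

Lemma memrho N k v (A : array N k v) (T : interaction k 3 v) r :
  r \in rho A T -> forall (j : 'I_3) (c : 'I_k), val c = val T.1 + val j -> A r c = T.2 j.
Proof.
by rewrite inE => /forallP H j c hc; have /forallP/(_ c)/implyP := H j; rewrite hc eqxx => /(_ isT)/eqP.
Qed.

Lemma in_window N k v (A : array N k v) (T : interaction k 3 v) r1 r2 :
  r1 \in rho A T -> r2 \in rho A T -> forall c : 'I_k, val T.1 <= c <= val T.1 + 2 ->
  A r1 c = A r2 c.
Proof.
move=> h1 h2 c /andP[lo hi].
have hj : c - val T.1 < 3 by lia.
by rewrite (memrho h1 (j := Ordinal hj)) ?(memrho h2 (j := Ordinal hj)) //= subnKC.
Qed.

Theorem mainTheorem16 (v k d : nat) :
  2 <= v -> (k = 5 \/ k = 6) -> 0 < d -> d + 1 <= v ->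
  optimum_CDA_exists d 3 k v.
Proof.
move=> v2 hk _ hdv.
have k6 : k <= 6 by case: hk => ->.
case: v v2 hdv => [|[|n]] // _ hdv.
have hdv' : d.+1 <= n.+2 by rewrite -addn1.
pose D := ('I_d.+1 * ('I_n.+2 * ('I_n.+2 * 'I_n.+2)))%type.
have eD : #|{: D}| = (d + 1) * n.+2 ^ 3.
  by rewrite !card_prod !card_ord addn1 !expnS expn0 muln1.
pose dec (r : 'I_((d + 1) * n.+2 ^ 3)) : D := enum_val (cast_ord (esym eD) r).
pose enc (x : D) : 'I_((d + 1) * n.+2 ^ 3) := cast_ord eD (enum_rank x).
have decK : cancel enc dec by move=> x; rewrite /dec /enc cast_ordK enum_rankK.
have encK : cancel dec enc by move=> r; rewrite /dec /enc enum_valK cast_ordKV.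
pose sv (s : 'I_d.+1) : 'I_n.+2 := widen_ord hdv' s.
pose A : array ((d + 1) * n.+2 ^ 3) k n.+2 :=
  (\matrix_(r, c) let x := dec r in entry (sv x.1) x.2.1 x.2.2.1 x.2.2.2 (val c))%R.
exists A; apply: cda_of.
- move=> [i x].
  have hi : (i : nat) <= 3 by have := ltn_ord i; lia.
  pose x0 := x (@Ordinal 3 0 isT); pose x1 := x (@Ordinal 3 1 isT);
  pose x2 := x (@Ordinal 3 2 isT).
  exists (fun s => enc (s, solve ((i : nat)) (sv s) x0 x1 x2)); split.
    by move=> s1 s2 /(can_inj decK) /(congr1 fst).
  move=> s; rewrite inE; apply/forallP => j; apply/forallP => c.
  apply/implyP => /eqP hc; rewrite /A mxE decK /= hc solve_ok ?(ltn_ord j) //.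
  by rewrite (ffun3 x j).
- move=> [i1 x1] [i2 x2] r1 r2 h11 h12 h21 h22.
  have hi1 := ltn_ord i1; have hi2 := ltn_ord i2.
  have gen : forall (T1 T2 : interaction k 3 n.+2), (T1.1 : nat) < (T2.1 : nat) ->
     r1 \in rho A T1 -> r1 \in rho A T2 -> r2 \in rho A T1 -> r2 \in rho A T2 -> r1 = r2.
    move=> [j1 y1] [j2 y2] /= lt g11 g12 g21 g22.
    have hj1 := ltn_ord j1; have hj2 := ltn_ord j2.
    have agree : forall c, (j1 : nat) <= c <= (j1 : nat) + 3 ->
        entry (sv (dec r1).1) (dec r1).2.1 (dec r1).2.2.1 (dec r1).2.2.2 c =
        entry (sv (dec r2).1) (dec r2).2.1 (dec r2).2.2.1 (dec r2).2.2.2 c.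
      move=> c hc; have hck : c < k by lia.
      have e : A r1 (Ordinal hck) = A r2 (Ordinal hck).
        case: (leqP c ((j1 : nat) + 2)) => hc2.
          by apply: (in_window g11 g21) => /=; apply/andP; split; lia.
        by apply: (in_window g12 g22) => /=; apply/andP; split; lia.
      by move: e; rewrite !mxE.
    have ed : dec r1 = dec r2.
      have hj : (j1 : nat) <= 2 by lia.
      move: (entry_inj hj agree).
      case: (dec r1) => [s [a [b c]]]; case: (dec r2) => [s' [a' [b' c']]] /=.
      by case=> /(congr1 val) /= /val_inj -> -> -> ->.
    exact: (can_inj encK).
  case: (ltngtP ((i1 : nat)) ((i2 : nat))) => hlt.
  + by left; exact: (gen (i1, x1) (i2, x2)).
  + by left; exact: (gen (i2, x2) (i1, x1)).
  right; have ei : i1 = i2 by apply: val_inj.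
  subst i2; congr pair; apply/ffunP => j.
  have hc : (i1 : nat) + (j : nat) < k by have := ltn_ord j; lia.
  by rewrite -(memrho h11 (j := j) (c := Ordinal hc)) // (memrho h12 (j := j) (c := Ordinal hc)).
Qed.
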